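(* For every $n\ge 2$, $\lceil \log_2 n\rceil \le \mathrm{isat}(n,\mathcal{D}_2)\le n+1$.
   Context: $\mathcal{B}_n$ denotes the Boolean lattice $(2^{[n]},\subseteq)$. A family $\mathcal{F}\subseteq 2^{[n]}$ (ordered by inclusion) is induced-$\mathcal{P}$-saturated if it contains no induced copy of $\mathcal{P}$ (an injection $f$ with $u\le v\iff f(u)\subseteq f(v)$) but every family $\mathcal{F}'$ with $\mathcal{F}\subsetneq\mathcal{F}'\subseteq 2^{[n]}$ contains one. $\mathrm{isat}(n,\mathcal{P})$ is the minimum size of an induced-$\mathcal{P}$-saturated family in $\mathcal{B}_n$. $\mathcal{D}_2$ (the diamond) is the four-element poset $\{A,B,C,D\}$ with $A<B<D$, $A<C<D$, and $B,C$ incomparable. *)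

(* Defs.v *)
From mathcomp Require Import all_boot.
Set Implicit Arguments. Unset Strict Implicit. Unset Printing Implicit Defensive.

(* The Boolean lattice B_n: subsets of [n] = 'I_n, ordered by inclusion.
   A family is an element of {set {set 'I_n}}. *)

(* A finite poset given by its (reflexive, antisymmetric, transitive) order
   relation [le] on a finType [P]. *)
Definition has_induced_copy (n : nat) (P : finType) (le : rel P)
  (F : {set {set 'I_n}}) : Prop :=
  exists f : P -> {set 'I_n},
    injective f /\ (forall u, f u \in F) /\
    (forall u v, le u v = (f u \subset f v)).

Definition induced_saturated (n : nat) (P : finType) (le : rel P)
  (F : {set {set 'I_n}}) : Prop :=
  ~ has_induced_copy le F /\
  (forall F' : {set {set 'I_n}}, F \proper F' -> has_induced_copy le F').

(* The diamond D_2 on 'I_4 : 0 = A, 1 = B, 2 = C, 3 = D, with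
   A < B < D, A < C < D, B and C incomparable. *)
Definition diamond_le : rel 'I_4 :=
  fun u v => (u == v) || (val u == 0) || (val v == 3).

(* Main.v *)
Require Import Defs.
From mathcomp Require Import all_boot.
Set Implicit Arguments. Unset Strict Implicit.

Lemma diamond_antisym (u v : 'I_4) :
  diamond_le u v -> diamond_le v u -> u = v.
Proof.
move=> h1 h2; apply/eqP; move: h1 h2.
by case: u v => [[|[|[|[|u]]]] hu] [[|[|[|[|v]]]] hv].
Qed.

Lemma no_twin (a t : 'I_4) : a != t -> diamond_le a t || diamond_le t a ->
  exists u : 'I_4,
  [&& u != a, u != t &
   (diamond_le u a != diamond_le u t) || (diamond_le a u != diamond_le t u)].
Proof.
case: a t => [[|[|[|[|a]]]] ha] [[|[|[|[|t]]]] ht] //= _ _;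
 first [ by exists ord0 | by exists (Ordinal (isT : 1 < 4))
       | by exists (Ordinal (isT : 2 < 4)) | by exists ord_max ].
Qed.

Lemma copy_of_rel n (F : {set {set 'I_n}}) (f : 'I_4 -> {set 'I_n}) :
  (forall u, f u \in F) -> (forall u v, diamond_le u v = (f u \subset f v)) ->
  has_induced_copy diamond_le F.
Proof.
move=> hF hr; exists f; split; last by [].
move=> u v e; apply: diamond_antisym; by rewrite hr e.
Qed.

Lemma twin_free n (F : {set {set 'I_n}}) A T :
  ~ has_induced_copy diamond_le F -> A \in F -> T \notin F ->
  (A \subset T) || (T \subset A) ->
  (forall B, B \in F -> B != A ->
     (B \subset T) = (B \subset A) /\ (T \subset B) = (A \subset B)) ->
  ~ has_induced_copy diamond_le (T |: F).
Proof.
move=> nF AF TF cmp tw [f [finj [fF frel]]].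
have memF u : f u != T -> f u \in F.
  by move=> h; move: (fF u); rewrite in_setU1 (negbTE h).
have AT : A != T by apply: contraNneq TF => <-.
case: (pickP (fun u => f u == A)) => [a /eqP fa | nA].
  case: (pickP (fun u => f u == T)) => [t /eqP ft | nT].
    have at' : a != t by apply: contra_neq AT => e; rewrite -fa -ft e.
    have cat : diamond_le a t || diamond_le t a by rewrite !frel fa ft.
    have [u /and3P [ua ut hu]] := @no_twin a t at' cat.
    have fuT : f u != T by rewrite -ft; apply: contra_neq ut => /finj.
    have fuA : f u != A by rewrite -fa; apply: contra_neq ua => /finj.
    have [e1 e2] := tw _ (memF _ fuT) fuA.
    by move: hu; rewrite !frel fa ft e1 e2 !eqxx.
  apply: nF; exists f; split=> //; split=> // u.
  by apply: memF; rewrite nT.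
apply: nF; apply: (@copy_of_rel _ _ (fun u => if f u == T then A else f u)).
  by move=> u; case: ifP => [_ | /negbT h] //; exact: memF.
move=> u v; rewrite frel.
case: ifP => [/eqP hu | /negbT hu]; case: ifP => [/eqP hv | /negbT hv].
- by rewrite hu hv !subxx.
- by rewrite hu; have [_ ->] := tw _ (memF _ hv) (negbT (nA v)).
- by rewrite hv; have [-> _] := tw _ (memF _ hu) (negbT (nA u)).
- by [].
Qed.

Lemma proper_add n (F : {set {set 'I_n}}) T : T \notin F -> F \proper T |: F.
Proof.
move=> TF; rewrite properE subsetU1 /=; apply/negP => /subsetP /(_ T (setU11 T F)).
by rewrite (negbTE TF).
Qed.

Lemma no_copy1 n (X : {set 'I_n}) : ~ has_induced_copy diamond_le [set X].
Proof.
move=> [f [_ [fF frel]]].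
have e u : f u = X by apply/set1P.
have := frel (Ordinal (isT : 1 < 4)) ord0.
by rewrite !e subxx.
Qed.

Lemma separate n (F : {set {set 'I_n}}) : induced_saturated diamond_le F ->
  forall x y : 'I_n, x != y -> exists2 B, B \in F & (x \in B) != (y \in B).
Proof.
move=> [nF sat] x y xy.
case: (boolP [exists B in F, (x \in B) != (y \in B)]) => [/existsP [B /andP [BF hB]] | hno].
  by exists B.
have hns B : B \in F -> (x \in B) = (y \in B).
  move=> BF; apply/eqP; apply: contraNT hno => h; apply/existsP; exists B.
  by rewrite BF.
exfalso.
have Fne : exists B0, B0 \in F.
  case: (set_0Vmem F) => [F0 | [B BF]]; last by exists B.
  exfalso; apply: (@no_copy1 n set0); apply: sat; rewrite F0 properE sub0set /=.
  by apply/negP => /subsetP /(_ set0 (set11 _)); rewrite inE.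
have key A T : A \in F -> T \notin F -> (A \subset T) || (T \subset A) ->
  (forall B, B \in F -> B != A ->
     (B \subset T) = (B \subset A) /\ (T \subset B) = (A \subset B)) -> False.
  move=> AF TF cmp tw.
  have h1 := twin_free nF AF TF cmp tw. have h2 := sat _ (proper_add TF). exact: h1 h2.
case: (boolP [exists B in F, x \in B]) => [/existsP [B0 /andP [B0F xB0]] | hx].
  have P0 : (B0 \in F) && (x \in B0) by rewrite B0F.
  case: (@arg_minnP _ B0 (fun B : {set 'I_n} => (B \in F) && (x \in B)) (fun B : {set 'I_n} => #|B|) P0) => A /andP [AF xA] Amin.
  have yA : y \in A by rewrite -(hns _ AF).
  apply: (key A (A :\ x)) => //.
  - apply/negP => TF; have := hns _ TF.
    by rewrite !in_setD1 eqxx yA eq_sym xy.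
  - by rewrite subsetDl orbT.
  move=> B BF BA; split.
    apply/idP/idP => [h | h]; first exact: subset_trans h (subsetDl _ _).
    case: (boolP (x \in B)) => xB.
      have := Amin B; rewrite BF xB => /(_ isT) cAB.
      by move: BA; have := eqEcard B A; rewrite h cAB => ->.
    apply/subsetP => z zB; rewrite in_setD1 (subsetP h z zB) andbT.
    by apply: contraNneq xB => <-.
  apply/idP/idP => [h | h]; last exact: subset_trans (subsetDl _ _) h.
  have yB : y \in B by apply: (subsetP h); rewrite in_setD1 eq_sym xy.
  have xB : x \in B by rewrite (hns _ BF).
  apply/subsetP => z zA; case: (eqVneq z x) => [-> // | zx].
  by apply: (subsetP h); rewrite in_setD1 zx.
have nxF B : B \in F -> x \notin B.
  by move=> BF; apply: contraNN hx => xB; apply/existsP; exists B; rewrite BF.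
case: Fne => B0 B0F.
case: (arg_maxnP (fun B : {set 'I_n} => #|B|) B0F) => A AF Amax.
apply: (key A (x |: A)) => //.
- by apply/negP => /nxF; rewrite setU11.
- by rewrite subsetU1.
move=> B BF BA; split.
  apply/idP/idP => [h | h]; last exact: subset_trans h (subsetU1 _ _).
  apply/subsetP => z zB; move: (subsetP h z zB); rewrite in_setU1.
  case: (eqVneq z x) => [ezx | //]; by move: zB; rewrite ezx (negbTE (nxF _ BF)).
have -> : (x |: A \subset B) = false.
  by apply/negP => /subsetP /(_ x (setU11 _ _)); rewrite (negbTE (nxF _ BF)).
apply/esym/negP => h.
have := eqEcard A B; rewrite h (Amax B BF : #|B| <= #|A|) /= => /eqP eAB.
by move: BA; rewrite eAB eqxx.
Qed.

Lemma lower n (F : {set {set 'I_n}}) : induced_saturated diamond_le F ->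
  up_log 2 n <= #|F|.
Proof.
move=> hF; apply: up_log_min => //.
pose g := fun x : 'I_n => [set B in F | x \in B].
have ginj : injective g.
  move=> x y e; apply/eqP; apply: contraT => xy.
  have [B BF hB] := separate hF xy.
  have : (B \in g x) = (B \in g y) by rewrite e.
  by rewrite !inE BF /= => hh; move: hB; rewrite hh eqxx.
rewrite -card_powerset -{1}(card_ord n) -(card_imset _ ginj).
apply: subset_leq_card; apply/subsetP => _ /imsetP [x _ ->].
rewrite powersetE; apply/subsetP => B; rewrite inE; by case/andP.
Qed.

Definition pre n (k : nat) : {set 'I_n} := [set z : 'I_n | z < k].

Lemma pre_sub n a b : a <= b -> pre n a \subset pre n b.
Proof.
move=> ab; apply/subsetP => z; rewrite !inE => za; exact: leq_trans za ab.
Qed.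

Definition chainF n : {set {set 'I_n}} := [set pre n k | k : 'I_n.+1].

Lemma chainF_mem n k : k <= n -> pre n k \in chainF n.
Proof.
by move=> kn; apply/imsetP; exists (Ordinal (kn : k < n.+1)).
Qed.

Lemma chainF_free n : ~ has_induced_copy diamond_le (chainF n).
Proof.
move=> [f [_ [fF frel]]].
have h1 := frel (Ordinal (isT : 1 < 4)) (Ordinal (isT : 2 < 4)).
have h2 := frel (Ordinal (isT : 2 < 4)) (Ordinal (isT : 1 < 4)).
move: (fF (Ordinal (isT : 1 < 4))) (fF (Ordinal (isT : 2 < 4))) h1 h2.
move=> /imsetP [a _ ->] /imsetP [b _ ->].
by case: (leqP a b) => [ab | /ltnW ba]; [rewrite (pre_sub n ab) | rewrite (pre_sub n ba)].
Qed.

Lemma chainF_sat n (F' : {set {set 'I_n}}) : chainF n \proper F' ->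
  has_induced_copy diamond_le F'.
Proof.
move=> hp; have sub : chainF n \subset F' by move: hp; rewrite properE => /andP [].
have memF k : k <= n -> pre n k \in F' by move=> kn; exact: (subsetP sub _ (chainF_mem kn)).
move: hp; rewrite properE => /andP [_ /subsetPn [S SF' SnF]].
have neq k : k <= n -> (S == pre n k) = false.
  move=> kn; apply/negP => /eqP e; move: SnF; rewrite e; by rewrite chainF_mem.
have P0 : pre n (@ord0 n) \subset S by apply/subsetP => z; rewrite inE.
case: (@arg_maxnP _ ord0 (fun k : 'I_n.+1 => pre n k \subset S) val P0) => i hi imax.
have Pn : S \subset pre n (@ord_max n) by apply/subsetP => z _; rewrite inE ltn_ord.
case: (@arg_minnP _ ord_max (fun k : 'I_n.+1 => S \subset pre n k) val Pn) => j hj jmin.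
have iln : i < n.
  rewrite ltnNge; apply/negP => ni.
  have : S == pre n i.
    rewrite eqEsubset hi andbT; apply/subsetP => z _; rewrite inE.
    exact: leq_trans (ltn_ord z) ni.
  by rewrite neq // -ltnS ltn_ord.
pose i' : 'I_n := Ordinal iln.
have i'S : i' \notin S.
  apply/negP => iS.
  have : pre n i.+1 \subset S.
    apply/subsetP => z; rewrite inE ltnS leq_eqVlt => /orP [/eqP ez | zi].
      by have -> : z = i' by apply: val_inj.
    by apply: (subsetP hi); rewrite inE.
  move=> /(imax (Ordinal (iln : i.+1 < n.+1))) /=.
  by rewrite ltnn.
have f1 : (S \subset pre n i) = false.
  by apply/negP => h; move: (neq i (ltn_ord i : i <= n)); rewrite eqEsubset h hi.
have f2 : (S \subset pre n i.+1) = false.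
  apply/negP => h; suff: S \subset pre n i by rewrite f1.
  apply/subsetP => z zS; move: (subsetP h z zS); rewrite !inE ltnS leq_eqVlt.
  case/orP => [/eqP ez | //]; have ez' : z = i' by apply: val_inj.
  by move: zS; rewrite ez' (negbTE i'S).
have jl : i.+1 < j.
  rewrite ltnNge; apply/negP => ji.
  by move: f2; rewrite (subset_trans hj (pre_sub n ji)).
have t3 : pre n i \subset pre n j by exact: subset_trans hi hj.
have t5 : pre n i.+1 \subset pre n j by apply: pre_sub; exact: ltnW.
have t2 : pre n i \subset pre n i.+1 by apply: pre_sub.
have f3 : (pre n i.+1 \subset pre n i) = false.
  apply/negP => /subsetP /(_ i'); rewrite !inE ltnn ltnSn.
  by move=> /(_ isT).
have f4 : (pre n i.+1 \subset S) = false.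
  apply/negP => /subsetP /(_ i'); rewrite !inE ltnSn (negbTE i'S).
  by move=> /(_ isT).
have f5 : (pre n j \subset pre n i) = false.
  by apply/negP => h; move: f1; rewrite (subset_trans hj h).
have f6 : (pre n j \subset S) = false.
  by apply/negP => h; move: (neq j (ltn_ord j : j <= n)); rewrite eqEsubset h hj.
have f7 : (pre n j \subset pre n i.+1) = false.
  by apply/negP => h; move: f2; rewrite (subset_trans hj h).
pose f := fun u : 'I_4 => match val u with
  | 0 => pre n i | 1 => S | 2 => pre n i.+1 | _ => pre n j end.
apply: (@copy_of_rel _ _ f).
  case=> [[|[|[|[|u]]]] hu] //=; rewrite /f /=.
  - exact: memF (ltn_ord i : i <= n).
  - exact: memF.
  - exact: memF (ltn_ord j : j <= n).
case=> [[|[|[|[|u]]]] hu] //; case=> [[|[|[|[|v]]]] hv] //;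
  rewrite /f /= ?subxx ?hi ?hj ?t2 ?t3 ?t5 ?f1 ?f2 ?f3 ?f4 ?f5 ?f6 ?f7 //.
Qed.

Theorem theorem1p5 (n : nat) (hn : 2 <= n) :
  (exists F : {set {set 'I_n}},
      induced_saturated diamond_le F /\ #|F| <= n.+1) /\
  (forall F : {set {set 'I_n}},
      induced_saturated diamond_le F -> up_log 2 n <= #|F|).
Proof.
split; last exact: lower.
exists (chainF n); split; first by split; [exact: chainF_free | exact: chainF_sat].
by rewrite /chainF (leq_trans (leq_imset_card _ _)) // card_ord.
Qed.
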